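(* Let $P$ be a finite poset and $R$ a consistent restriction function on $P$. Then there is a bijection between the set of meet-irreducible elements of the lattice $\mathrm{Inc}^R(P)$ and the set of pairs $(p,k)$ with $p\in P$ and $k\in R(p)\setminus\{\max R(p)\}$.
   Context: A restriction function assigns to each $p\in P$ a nonempty finite set $R(p)\subseteq\mathbb{Z}$. $\mathrm{Inc}^R(P)$ is the set of $f:P\to\mathbb{Z}$ with $f(p)\in R(p)$ and $p_1<p_2\Rightarrow f(p_1)<f(p_2)$, ordered by $f\le g$ iff $f(p)\le g(p)$ for all $p$; it is a distributive lattice with pointwise min and max as meet and join. An element $x$ is meet-irreducible if it is not the top element and $x=y\wedge z$ implies $x\in\{y,z\}$. $R$ is consistent if for every cover $x\lessdot y$ in $P$, $\min R(x)<\min R(y)$ and $\max R(x)<\max R(y)$. *)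

(* Defs.v *)
From mathcomp Require Import all_boot all_order all_algebra.
Set Implicit Arguments. Unset Strict Implicit. Unset Printing Implicit Defensive.
Import Order.TTheory GRing.Theory Num.Theory.

(* A restriction function is R : P -> seq int; R p is read as the finite set of
   its members.  Nonemptiness is a separate hypothesis. *)

Definition seqmax (s : seq int) : int := foldr Num.max (head 0%R s) s.
Definition seqmin (s : seq int) : int := foldr Num.min (head 0%R s) s.

Definition covers (d : Order.disp_t) (P : porderType d) (x y : P) : Prop :=
  (x < y)%O /\ ~ (exists z : P, (x < z)%O /\ (z < y)%O).

Definition consistent (d : Order.disp_t) (P : porderType d) (R : P -> seq int) : Prop :=
  forall x y : P, covers x y ->
    (seqmin (R x) < seqmin (R y))%R /\ (seqmax (R x) < seqmax (R y))%R.

Definition inInc (d : Order.disp_t) (P : porderType d) (R : P -> seq int)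
  (f : P -> int) : Prop :=
  (forall p, f p \in R p) /\ (forall p1 p2 : P, (p1 < p2)%O -> (f p1 < f p2)%R).

Definition leF (T : Type) (f g : T -> int) : Prop := forall p, (f p <= g p)%R.

Definition meetF (T : Type) (f g : T -> int) : T -> int := fun p => Num.min (f p) (g p).

Definition meet_irreducible (d : Order.disp_t) (P : porderType d)
  (R : P -> seq int) (x : P -> int) : Prop :=
  [/\ inInc R x,
      ~ (forall y, inInc R y -> leF y x)
    & forall y z, inInc R y -> inInc R z -> x = meetF y z -> x = y \/ x = z].

(* Main.v *)
Require Import Defs.
From mathcomp Require Import all_boot all_order all_algebra.
From mathcomp Require Import zify.
From Stdlib Require Import Classical ClassicalEpsilon FunctionalExtensionality ProofIrrelevance.
Set Implicit Arguments. Unset Strict Implicit. Unset Printing Implicit Defensive.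
Import Order.TTheory GRing.Theory Num.Theory.
Local Open Scope ring_scope.

Lemma foldr_max_ge (s : seq int) a : a <= foldr Num.max a s /\ forall r, r \in s -> r <= foldr Num.max a s.
Proof.
elim: s => [|x s [IH1 IH2]] /=; first by split=> // r.
split; first by rewrite le_max IH1 orbT.
move=> r; rewrite inE => /orP [/eqP->|/IH2 h]; first by rewrite le_max lexx.
by rewrite le_max h orbT.
Qed.

Lemma foldr_max_in (s : seq int) a : foldr Num.max a s \in a :: s.
Proof.
elim: s => [|x s IH] /=; first by rewrite inE.
rewrite /Num.max; case: ifP => _; rewrite !inE ?eqxx ?orbT //.
move: IH; rewrite !inE => /orP [->//|->]; by rewrite !orbT.
Qed.

Lemma foldr_min_le (s : seq int) a : foldr Num.min a s <= a /\ forall r, r \in s -> foldr Num.min a s <= r.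
Proof.
elim: s => [|x s [IH1 IH2]] /=; first by split=> // r.
split; first by rewrite ge_min IH1 orbT.
move=> r; rewrite inE => /orP [/eqP->|/IH2 h]; first by rewrite ge_min lexx.
by rewrite ge_min h orbT.
Qed.

Lemma foldr_min_in (s : seq int) a : foldr Num.min a s \in a :: s.
Proof.
elim: s => [|x s IH] /=; first by rewrite inE.
rewrite /Num.min; case: ifP => _; rewrite !inE ?eqxx ?orbT //.
move: IH; rewrite !inE => /orP [->//|->]; by rewrite !orbT.
Qed.

Lemma seqmax_in s : s != [::] -> seqmax s \in s.
Proof.
case: s => [//|x s] _; rewrite /seqmax /=.
have := foldr_max_in (x :: s) x. rewrite /= !inE.
by case/orP=> [->//|]; rewrite ?orbA ?orbb.
Qed.

Lemma seqmax_ge s r : r \in s -> r <= seqmax s.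
Proof. by move=> h; have [_ ->] := foldr_max_ge s (head 0 s). Qed.

Lemma seqmin_in s : s != [::] -> seqmin s \in s.
Proof.
case: s => [//|x s] _; rewrite /seqmin /=.
have := foldr_min_in (x :: s) x. rewrite /= !inE.
by case/orP=> [->//|]; rewrite ?orbA ?orbb.
Qed.

Lemma seqmin_le s r : r \in s -> seqmin s <= r.
Proof. by move=> h; have [_ ->] := foldr_min_le s (head 0 s). Qed.

Lemma t1 (M a b : int) : a <= M -> b <= M -> (`|M - Num.max a b| <= `|M - a|)%N.
Proof. move=> h1 h2. rewrite /Num.max. case: ifP => h; lia. Qed.
Lemma t2 (M a b : int) : a <= M -> b <= M -> a < b -> (`|M - Num.max a b| < `|M - a|)%N.
Proof. move=> h1 h2 h3. rewrite /Num.max h3. lia. Qed.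

Lemma mono (d : Order.disp_t) (P : finPOrderType d) (R : P -> seq int)
  (Hc : consistent R) (p q : P) : (p < q)%O ->
  seqmin (R p) < seqmin (R q) /\ seqmax (R p) < seqmax (R q).
Proof.
move: {2}#|_| (leqnn #|[pred z : P | (p < z)%O && (z < q)%O]|) => n.
elim: n p q => [|n IH] p q.
  rewrite leqn0 => /eqP/card0_eq h pq; apply: Hc; split=> // [[z [h1 h2]]].
  by have := h z; rewrite inE h1 h2.
move=> hn pq.
case: (boolP [exists z, (p < z)%O && (z < q)%O]) => [/existsP [z /andP [pz zq]]|hne].
  have lt1 : (#|[pred w : P | (p < w)%O && (w < z)%O]| < #|[pred z : P | (p < z)%O && (z < q)%O]|)%N.
    apply: proper_card; apply/properP; split.
      apply/subsetP=> w; rewrite !inE => /andP [-> wz]; exact: lt_trans wz zq.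
    by exists z; rewrite !inE ?pz ?zq ?ltxx ?andbF.
  have lt2 : (#|[pred w : P | (z < w)%O && (w < q)%O]| < #|[pred z : P | (p < z)%O && (z < q)%O]|)%N.
    apply: proper_card; apply/properP; split.
      apply/subsetP=> w; rewrite !inE => /andP [zw ->]; by rewrite (lt_trans pz zw).
    by exists z; rewrite !inE ?pz ?zq ?ltxx.
  have [a1 a2] := IH p z (leq_trans (ltnSE (leq_trans lt1 hn)) (leqnn _)) pz.
  have [b1 b2] := IH z q (ltnSE (leq_trans lt2 hn)) zq.
  by split; [exact: lt_trans a1 b1 | exact: lt_trans a2 b2].
apply: Hc; split=> // [[z [h1 h2]]].
by move: hne; rewrite negb_exists => /forallP /(_ z); rewrite h1 h2.
Qed.

Definition joinF (T : Type) (f g : T -> int) : T -> int := fun p => Num.max (f p) (g p).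

Lemma inInc_meet d (P : porderType d) (R : P -> seq int) f g :
  inInc R f -> inInc R g -> inInc R (meetF f g).
Proof.
move=> [f1 f2] [g1 g2]; split=> [p|p1 p2 h]; rewrite /meetF.
  by rewrite /Num.min; case: ifP.
by rewrite lt_min !gt_min f2 ?g2 ?orbT.
Qed.

Lemma inInc_join d (P : porderType d) (R : P -> seq int) f g :
  inInc R f -> inInc R g -> inInc R (joinF f g).
Proof.
move=> [f1 f2] [g1 g2]; split=> [p|p1 p2 h]; rewrite /joinF.
  by rewrite /Num.max; case: ifP.
by rewrite gt_max !lt_max f2 ?g2 ?orbT.
Qed.

Lemma inInc_fmax d (P : finPOrderType d) (R : P -> seq int) (HR : forall p, R p != [::])
  (Hc : consistent R) : inInc R (fun q => seqmax (R q)).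
Proof.
split=> [p|p1 p2 h]; first exact: seqmax_in.
by have [] := mono Hc h.
Qed.

Lemma minmax (s : seq int) : s != [::] -> seqmin s <= seqmax s.
Proof. by move=> h; apply: seqmax_ge; apply: seqmin_in. Qed.

Definition fk d (P : porderType d) (R : P -> seq int) (p : P) (k : int) : P -> int :=
  fun q => if q == p then k else if (p < q)%O then seqmax (R q) else seqmin (R q).

Lemma inInc_fk d (P : finPOrderType d) (R : P -> seq int) (HR : forall p, R p != [::])
  (Hc : consistent R) p k : k \in R p -> inInc R (fk R p k).
Proof.
move=> kR; split=> [q|q1 q2 h]; rewrite /fk.
  case: eqP => [->//|_]; case: ifP => _; [exact: seqmax_in | exact: seqmin_in].
have [a1 a2] := mono Hc h.
case: (q1 =P p) => [e1|n1].
  subst q1; rewrite gt_eqF // h.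
  exact: le_lt_trans (seqmax_ge kR) a2.
case: (q2 =P p) => [e2|n2].
  subst q2; rewrite (_ : (p < q1)%O = false); last first.
    by apply/negbTE; apply/negP => h2; have := lt_trans h h2; rewrite ltxx.
  exact: lt_le_trans a1 (seqmin_le kR).
case: ifP => h1.
  by rewrite (lt_trans h1 h).
case: ifP => // _.
exact: lt_le_trans a1 (minmax (HR q2)).
Qed.

Lemma inInc_bounds d (P : porderType d) (R : P -> seq int) f q :
  inInc R f -> seqmin (R q) <= f q <= seqmax (R q).
Proof. by move=> [h _]; rewrite seqmin_le ?seqmax_ge. Qed.

Lemma sum_lt (I : finType) (a b : I -> nat) j :
  (forall i, a i <= b i)%N -> (a j < b j)%N -> (\sum_i a i < \sum_i b i)%N.
Proof.
move=> h hj; rewrite (bigD1 j) //= [X in (_ < X)%N](bigD1 j) //=.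
rewrite -addSn; apply: leq_add => //; exact: leq_sum.
Qed.

Lemma greatest d (P : finPOrderType d) (R : P -> seq int) p k f0 :
  inInc R f0 -> f0 p <= k ->
  exists x, [/\ inInc R x, x p <= k & forall f, inInc R f -> f p <= k -> leF f x].
Proof.
pose mu (f : P -> int) := (\sum_(q : P) `|seqmax (R q) - f q|)%N.
move: {2}(mu f0) (leqnn (mu f0)) => n.
elim: n f0 => [|n IH] f0 hmu Hf0 Hp;
  (case: (Classical_Prop.classic (forall f, inInc R f -> f p <= k -> leF f f0)) => Hg;
   [by exists f0 | ]);
  (have [f [Hf1 Hf2 Hf3]] : exists f, [/\ inInc R f, f p <= k & ~ leF f f0]
   by apply: Classical_Prop.NNPP => hn; apply: Hg => f h1 h2;
      apply: Classical_Prop.NNPP => h3; apply: hn; exists f);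
  (have [q hq] : exists q, f0 q < f q
   by apply: Classical_Prop.NNPP => hn; apply: Hf3 => q;
      rewrite leNgt; apply/negP => h; apply: hn; exists q);
  (have ltmu : (mu (joinF f0 f) < mu f0)%N
   by apply: (sum_lt (j := q)) => [i|];
     [apply: t1; [case/andP: (inInc_bounds i Hf0) | case/andP: (inInc_bounds i Hf1)]
     | apply: t2; [case/andP: (inInc_bounds q Hf0) | case/andP: (inInc_bounds q Hf1) | ]]).
- by move: hmu; rewrite leqn0 => /eqP e; move: ltmu; rewrite e.
- apply: (IH (joinF f0 f)); first by rewrite -ltnS (leq_trans ltmu hmu).
    exact: inInc_join.
  by rewrite /joinF ge_max Hp Hf2.
Qed.

Definition isG d (P : porderType d) (R : P -> seq int) p k (x : P -> int) :=
  [/\ inInc R x, x p <= k & forall f, inInc R f -> f p <= k -> leF f x].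

Lemma leF_anti (T : Type) (f g : T -> int) : leF f g -> leF g f -> f = g.
Proof. move=> h1 h2; apply: functional_extensionality => q; apply/eqP; by rewrite eq_le h1 h2. Qed.

Lemma L1 d (P : finPOrderType d) (R : P -> seq int) (HR : forall p, R p != [::])
  (Hc : consistent R) p k x : k \in R p -> k != seqmax (R p) -> isG R p k x ->
  x p = k /\ meet_irreducible R x.
Proof.
move=> kR kM [xI xp xG].
have xpk : x p = k.
  apply/eqP; rewrite eq_le xp /=.
  have := xG _ (inInc_fk HR Hc kR); rewrite /fk eqxx => /(_ (lexx _) p).
  by rewrite eqxx.
split=> //; split=> //.
  move=> /(_ _ (inInc_fmax HR Hc) p); rewrite xpk => h.
  by move: kM; rewrite eq_le h seqmax_ge.
move=> y z yI zI e.
have ey : leF x y by rewrite e => q; rewrite /meetF ge_min lexx.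
have ez : leF x z by rewrite e => q; rewrite /meetF ge_min lexx orbT.
have : x p = meetF y z p by rewrite -e.
rewrite /meetF /Num.min; case: ifP => _ h.
  left; apply: leF_anti => //; apply: xG => //; by rewrite -h.
right; apply: leF_anti => //; apply: xG => //; by rewrite -h.
Qed.

Lemma L2a d (P : finPOrderType d) (R : P -> seq int) (HR : forall p, R p != [::])
  (Hc : consistent R) p k x p' : isG R p k x -> p' != p -> ~~ (p' < p)%O ->
  x p' < seqmax (R p') -> False.
Proof.
move=> [xI xp xG] npp nlt hlt.
have gI := inInc_fk HR Hc (seqmax_in (HR p')).
have yI := inInc_join xI gI.
have : leF (joinF x (fk R p' (seqmax (R p')))) x.
  apply: xG => //; rewrite /joinF /fk eq_sym (negbTE npp) (negbTE nlt).
  rewrite ge_max xp /=; case/andP: (inInc_bounds p xI) => h _.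
  exact: le_trans h xp.
move=> /(_ p'); rewrite /joinF /fk eqxx ge_max => /andP [_ h].
by move: hlt; rewrite ltNge h.
Qed.

Lemma L2 d (P : finPOrderType d) (R : P -> seq int) (HR : forall p, R p != [::])
  (Hc : consistent R) p k p' k' x : k \in R p -> k != seqmax (R p) ->
  k' \in R p' -> k' != seqmax (R p') -> isG R p k x -> isG R p' k' x ->
  p = p' /\ k = k'.
Proof.
move=> kR kM kR' kM' G G'.
have [xp _] := L1 HR Hc kR kM G.
have [xp' _] := L1 HR Hc kR' kM' G'.
case: (p =P p') => [e|ne]; first by subst p'; rewrite -xp -xp'.
exfalso.
have lt' : x p' < seqmax (R p') by rewrite lt_neqAle xp' kM' seqmax_ge.
have lt : x p < seqmax (R p) by rewrite lt_neqAle xp kM seqmax_ge.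
case: (boolP (p' < p)%O) => h.
  apply: (L2a HR Hc G') lt; first by apply/eqP.
  by apply/negP => h2; have := lt_trans h h2; rewrite ltxx.
apply: (L2a HR Hc G) h lt'; by apply/eqP => e; apply: ne.
Qed.

Lemma L3 d (P : finPOrderType d) (R : P -> seq int) (HR : forall p, R p != [::])
  (Hc : consistent R) m : meet_irreducible R m ->
  exists p, isG R p (m p) m /\ m p != seqmax (R p).
Proof.
move=> [mI mtop mMI].
have ex q : exists x, isG R q (m q) x.
  have [x [h1 h2 h3]] := greatest (p:=q) (k:=m q) mI (lexx _); by exists x.
pose X q := proj1_sig (constructive_indefinite_description _ (ex q)).
have XG q : isG R q (m q) (X q) := proj2_sig (constructive_indefinite_description _ (ex q)).
pose fmax := fun q : P => seqmax (R q).
pose F := foldr (fun q acc => meetF (X q) acc) fmax.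
have FI s : inInc R (F s).
  elim: s => [|q s IH] /=; first exact: inInc_fmax.
  by apply: inInc_meet => //; case: (XG q).
have Fge s : leF m (F s).
  elim: s => [|q s IH] /= r; first by case/andP: (inInc_bounds r mI).
  rewrite /meetF le_min IH andbT; case: (XG q) => _ _ h; exact: h.
have Fle s q : q \in s -> F s q <= m q.
  elim: s => [//|q' s IH] /=; rewrite inE => /orP [/eqP e|hq]; rewrite /meetF ge_min.
    by subst q'; case: (XG q) => _ -> _.
  by rewrite IH ?orbT.
have mF : m = F (enum P).
  by apply: leF_anti => // q; apply: Fle; rewrite mem_enum.
have A s : m = F s -> m = fmax \/ exists q, m = X q.
  elim: s => [|q s IH] /=; first by left.
  move=> e; have XI : inInc R (X q) by case: (XG q).
  case: (mMI _ _ XI (FI s) e) => e'.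
    by right; exists q.
  exact: IH.
case: (A _ mF) => [e|[q e]].
  exfalso; apply: mtop => y yI q; rewrite e /fmax.
  by case/andP: (inInc_bounds q yI).
have G : isG R q (m q) m by rewrite {2}e; exact: XG.
exists q; split=> //; apply/negP => /eqP hq.
apply: mtop => y yI; case: G => _ _; apply => //.
rewrite hq; by case/andP: (inInc_bounds q yI).
Qed.

Lemma sig_eq (T : Type) (Q : T -> Prop) (a b : {x | Q x}) : proj1_sig a = proj1_sig b -> a = b.
Proof.
case: a b => [x hx] [y hy] /= e; subst y; by rewrite (proof_irrelevance _ hx hy).
Qed.

Theorem proposition2p9 (d : Order.disp_t) (P : finPOrderType d)
  (R : P -> seq int) (HR : forall p, R p != [::]) (Hc : consistent R) :
  exists phi : {x : P -> int | meet_irreducible R x} ->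
               {pk : P * int | pk.2 \in R pk.1 /\ pk.2 != seqmax (R pk.1)},
    bijective phi.
Proof.
have exphi (m : {x : P -> int | meet_irreducible R x}) :
    exists pk : {pk : P * int | pk.2 \in R pk.1 /\ pk.2 != seqmax (R pk.1)},
      isG R (proj1_sig pk).1 (proj1_sig pk).2 (proj1_sig m).
  case: m => m mMI /=.
  have [p [G hp]] := L3 HR Hc mMI.
  have hR : m p \in R p by case: mMI => [[h _] _ _].
  by exists (exist _ (p, m p) (conj hR hp)).
have exg (pk : {pk : P * int | pk.2 \in R pk.1 /\ pk.2 != seqmax (R pk.1)}) :
    exists m : {x : P -> int | meet_irreducible R x},
      isG R (proj1_sig pk).1 (proj1_sig pk).2 (proj1_sig m).
  case: pk => [[p k] [kR kM]] /=.
  have hfk : fk R p k p <= k by rewrite /fk eqxx.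
  have [x [h1 h2 h3]] := greatest (inInc_fk HR Hc kR) hfk.
  have G : isG R p k x by [].
  have [_ MI] := L1 HR Hc kR kM G.
  by exists (exist _ x MI).
pose phi m := proj1_sig (constructive_indefinite_description _ (exphi m)).
pose g pk := proj1_sig (constructive_indefinite_description _ (exg pk)).
have phiG m : isG R (proj1_sig (phi m)).1 (proj1_sig (phi m)).2 (proj1_sig m) :=
  proj2_sig (constructive_indefinite_description _ (exphi m)).
have gG pk : isG R (proj1_sig pk).1 (proj1_sig pk).2 (proj1_sig (g pk)) :=
  proj2_sig (constructive_indefinite_description _ (exg pk)).
have uniqG p k x y : isG R p k x -> isG R p k y -> x = y.
  move=> [xI xp xG] [yI yp yG]; apply: leF_anti; [exact: yG | exact: xG].
exists phi; exists g.
  move=> m; apply: sig_eq; exact: uniqG (gG (phi m)) (phiG m).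
move=> [[p k] [kR kM]]; apply: sig_eq => /=.
set pk := exist _ _ _.
have G1 := gG pk. have G2 := phiG (g pk).
case: (phi (g pk)) G2 => [[p' k'] [kR' kM']] /= G2.
have [e1 e2] := L2 HR Hc kR' kM' kR kM G2 G1; simpl in e1, e2; subst.
by [].
Qed.
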